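(* Let $F$ be a finite-precision CDF and $S$ a finite-precision survival function over a binary number format $\mathcal{B}=(n,\gamma_{\mathcal{B}},\phi_{\mathcal{B}})$, with values in $\mathbb{F}^E_m\cap[0,1]$. Let $b^*:=\min_{<_{\mathcal{B}}}\{b\in\{0,1\}^n:F(b)\ge\mathrm{succ}(1/2)\}$ with $\mathrm{succ}(1/2)$ the smallest element of $\mathbb{F}^E_m$ greater than $1/2$, suppose $S(b^* )<1/2$, and define $G(b):=(0,F(b))$ if $b<_{\mathcal{B}}b^*$ and $G(b):=(1,S(b))$ if $b\ge_{\mathcal{B}}b^*$; let $G^*(b):=(1-d)f+d(1-f)$ for $(d,f)=G(b)$. Then: (i) there is a random variable $X$ with values in $\overline{\mathbb{R}}_{\mathcal{B}}:=\gamma_{\mathcal{B}}(\{0,1\}^n)$ such that $\Pr(X\le t)=(1-d)f+d(1-f)$ for every $t\in\overline{\mathbb{R}}_{\mathcal{B}}$, where $(d,f)=G(r(t))$ and $r(t):=\max_{<_{\mathcal{B}}}\{b\in\{0,1\}^n:\gamma_{\mathcal{B}}(b)\le t\}$; (ii) the image of $G$ is contained in $\{(0,f):0\le f\le1/2\}\cup\{(1,f):0\le f<1/2\}$; (iii) for all $b,b'\in\{0,1\}^n$, if the first component of $G(b)$ is less than the first component of $G(b')$, then $G^*(b)<G^*(b')$.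
   Context: $\overline{\mathbb{R}}=\mathbb{R}\cup\{-\infty,+\infty,\bot\}$ is totally ordered by $-\infty<$ reals $<+\infty<\bot$, with $\le$ the corresponding weak order. A binary number format $\mathcal{B}=(n,\gamma_{\mathcal{B}},\phi_{\mathcal{B}})$ consists of $n\ge1$, $\gamma_{\mathcal{B}}:\{0,1\}^n\to\overline{\mathbb{R}}$, and a bijection $\phi_{\mathcal{B}}$ of $\{0,1\}^n$ with $b<_{\mathrm{dict}}b'\Rightarrow\gamma_{\mathcal{B}}(\phi_{\mathcal{B}}(b))\le\gamma_{\mathcal{B}}(\phi_{\mathcal{B}}(b'))$; it induces the linear order $b<_{\mathcal{B}}b'$ iff $\phi_{\mathcal{B}}^{-1}(b)<_{\mathrm{dict}}\phi_{\mathcal{B}}^{-1}(b')$. $\mathbb{F}^E_m$ is the set of floating-point numbers with $E$ exponent and $m$ mantissa bits. A finite-precision CDF over $\mathcal{B}$ is $F:\{0,1\}^n\to\mathbb{F}^E_m\cap[0,1]$ with $F(\phi_{\mathcal{B}}(1^n))=1$ and $b<_{\mathcal{B}}b'\Rightarrow F(b)\le F(b')$. A finite-precision survival function over $\mathcal{B}$ is $S:\{0,1\}^n\to\mathbb{F}^E_m\cap[0,1]$ with $S(\phi_{\mathcal{B}}(1^n))=0$ and $b<_{\mathcal{B}}b'\Rightarrow S(b')\le S(b)$. *)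

(* Defs.v *)
From HB Require Import structures.
From mathcomp Require Import all_boot all_order all_algebra.
From mathcomp Require Import all_classical all_reals all_analysis.
Set Implicit Arguments.
Unset Strict Implicit.
Unset Printing Implicit Defensive.
Import Order.TTheory GRing.Theory Num.Theory.
Local Open Scope ring_scope.

(** Extended reals  R ∪ {-oo, +oo, ⊥}, totally ordered by
    -oo < reals < +oo < ⊥. *)
Inductive xreal (R : realType) : Type :=
  | XReal of R
  | XNinf
  | XPinf
  | XBot.
Arguments XNinf {R}. Arguments XPinf {R}. Arguments XBot {R}.

Definition xrank (R : realType) (x : xreal R) : nat :=
  match x with XNinf => 0 | XReal _ => 1 | XPinf => 2 | XBot => 3 end.

Definition xle (R : realType) (x y : xreal R) : bool :=
  match x, y with
  | XReal a, XReal b => a <= b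
  | _, _ => (xrank x <= xrank y)%N
  end.

Fixpoint lex_lt (s t : seq bool) : bool :=
  match s, t with
  | x :: s', y :: t' => (~~ x && y) || ((x == y) && lex_lt s' t')
  | _, _ => false
  end.

Definition dict_lt (n : nat) (b b' : n.-tuple bool) : bool := lex_lt b b'.

Record binformat (R : realType) (n : nat) := BinFormat {
  bf_gamma : n.-tuple bool -> xreal R;
  bf_phi : n.-tuple bool -> n.-tuple bool;
  bf_phi_inv : n.-tuple bool -> n.-tuple bool;
  bf_phiK : cancel bf_phi bf_phi_inv;
  bf_phi_invK : cancel bf_phi_inv bf_phi;
  bf_mono : forall b b' : n.-tuple bool, dict_lt b b' ->
     xle (bf_gamma (bf_phi b)) (bf_gamma (bf_phi b'))
}.

Definition bltB (R : realType) (n : nat) (B : binformat R n) (b b' : n.-tuple bool) : bool :=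
  dict_lt (bf_phi_inv B b) (bf_phi_inv B b').
Definition bleB (R : realType) (n : nat) (B : binformat R n) (b b' : n.-tuple bool) : bool :=
  (b == b') || bltB B b b'.

Definition ones (n : nat) : n.-tuple bool := [tuple of nseq n true].

(** The floating-point numbers F^E_m (IEEE-754 style binary format with
    E exponent bits and m mantissa bits, bias 2^(E-1)-1; the all-ones
    exponent field encodes infinities / NaN and contributes no real value;
    subnormals for exponent field 0).  Only the real-valued elements are
    described, which is all that matters inside [0,1]. *)
Definition is_float (R : realType) (E m : nat) (x : R) : Prop :=
  exists (s : bool) (e k : nat),
    [/\ (e < 2 ^ E - 1)%N, (k < 2 ^ m)%N &
      x = (-1) ^+ s *
          (if e == 0%N
           then (k%:R / (2 ^ m)%:R) * (2 : R) ^ (1 - (2 ^ E.-1 - 1)%:Z)%R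
           else (1 + k%:R / (2 ^ m)%:R) * (2 : R) ^ (e%:Z - (2 ^ E.-1 - 1)%:Z)%R)].

Definition is_fp_cdf (R : realType) (n E m : nat) (B : binformat R n)
    (F : n.-tuple bool -> R) : Prop :=
  [/\ forall b, is_float E m (F b) /\ 0 <= F b <= 1,
      F (bf_phi B (ones n)) = 1 &
      forall b b', bltB B b b' -> F b <= F b'].

Definition is_fp_survival (R : realType) (n E m : nat) (B : binformat R n)
    (S : n.-tuple bool -> R) : Prop :=
  [/\ forall b, is_float E m (S b) /\ 0 <= S b <= 1,
      S (bf_phi B (ones n)) = 0 &
      forall b b', bltB B b b' -> S b' <= S b].

Definition Gfun (R : realType) (n : nat) (B : binformat R n)
    (F S : n.-tuple bool -> R) (bstar : n.-tuple bool) (b : n.-tuple bool) : R * R :=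
  if bltB B b bstar then (0, F b) else (1, S b).

Definition Gstar (R : realType) (n : nat) (B : binformat R n)
    (F S : n.-tuple bool -> R) (bstar : n.-tuple bool) (b : n.-tuple bool) : R :=
  let: (d, f) := Gfun B F S bstar b in (1 - d) * f + d * (1 - f).

(* Main.v *)
Require Import Defs.
From HB Require Import structures.
From mathcomp Require Import all_boot all_order all_algebra.
From mathcomp Require Import all_classical all_reals all_analysis.
From mathcomp Require Import lra.
Import Order.TTheory GRing.Theory Num.Theory.
Local Open Scope ring_scope.
Local Open Scope classical_set_scope.
Set Implicit Arguments.
Unset Strict Implicit.

Lemma lex_irr (s : seq bool) : lex_lt s s = false.
Proof. by elim: s => //= x s ->; rewrite eqxx andbF andNb. Qed.

Lemma lex_trans (s t u : seq bool) : lex_lt s t -> lex_lt t u -> lex_lt s u.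
Proof.
elim: s t u => [|x s IH] [|y t] [|z u] //=.
by case: x; case: y; case: z => //=; apply: IH.
Qed.

Lemma lex_total (s t : seq bool) : size s = size t -> s <> t -> lex_lt s t || lex_lt t s.
Proof.
elim: s t => [|x s IH] [|y t] //= [] st neq.
case: x neq; case: y => //= neq; apply: IH => // e; apply: neq; by rewrite e.
Qed.

Lemma lex_ones (s : seq bool) : lex_lt (nseq (size s) true) s = false.
Proof. by elim: s => //= x s ->; case: x. Qed.

Lemma xle_refl (R : realType) (x : xreal R) : xle x x.
Proof. by case: x => //= r; rewrite lexx. Qed.

Lemma xle_trans (R : realType) (x y z : xreal R) : xle x y -> xle y z -> xle x z.
Proof. by case: x; case: y; case: z => //= a b c; apply: le_trans. Qed.

Section Ord.
Variables (R : realType) (n : nat) (B : binformat R n).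
Implicit Types b c : n.-tuple bool.

Lemma phi_inv_inj : injective (bf_phi_inv B).
Proof. exact: can_inj (@bf_phi_invK _ _ B). Qed.

Lemma bltB_irr b : bltB B b b = false.
Proof. by rewrite /bltB /dict_lt lex_irr. Qed.

Lemma bltB_trans b c d : bltB B b c -> bltB B c d -> bltB B b d.
Proof. exact: lex_trans. Qed.

Lemma bltB_asym b c : bltB B b c -> bltB B c b = false.
Proof. by move=> h; apply/negP => h'; have := bltB_trans h h'; rewrite bltB_irr. Qed.

Lemma bltB_total b c : b <> c -> bltB B b c || bltB B c b.
Proof.
move=> ne; apply: lex_total; first by rewrite !size_tuple.
by move=> e; apply: ne; apply: phi_inv_inj; apply: val_inj.
Qed.

Lemma bleB_trans b c d : bleB B b c -> bleB B c d -> bleB B b d.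
Proof.
rewrite /bleB => /orP[/eqP->//|h1] /orP[/eqP<-|h2]; first by rewrite h1 orbT.
by rewrite (bltB_trans h1 h2) orbT.
Qed.

Lemma bleB_total b c : bleB B b c || bleB B c b.
Proof.
rewrite /bleB; have [->|ne] := eqVneq b c; first by [].
by case/orP: (bltB_total (elimN eqP ne)) => ->; rewrite ?orbT.
Qed.

Lemma bleB_anti b c : bleB B b c -> bleB B c b -> b = c.
Proof.
rewrite /bleB => /orP[/eqP->//|h1] /orP[/eqP->//|h2].
by rewrite bltB_asym in h2.
Qed.

Lemma bleB_lt b c : bleB B b c -> bltB B c b = false.
Proof.
rewrite /bleB => /orP[/eqP->|h]; [exact: bltB_irr | exact: bltB_asym].
Qed.

Lemma top_max b : bltB B (bf_phi B (ones n)) b = false.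
Proof.
rewrite /bltB /dict_lt bf_phiK /ones /=.
by have := lex_ones (bf_phi_inv B b); rewrite size_tuple.
Qed.

Lemma gamma_mono b c : bleB B b c -> xle (bf_gamma B b) (bf_gamma B c).
Proof.
rewrite /bleB => /orP[/eqP->|h]; first exact: xle_refl.
have := @bf_mono _ _ B _ _ h; by rewrite !bf_phi_invK.
Qed.

End Ord.

Lemma in_setb (T : Type) (Q : T -> bool) (x : T) : (x \in [set w | Q w]) = Q x.
Proof. by apply/idP/idP => [/set_mem|/mem_set]. Qed.

Theorem propositionE2 (R : realType) (n E m : nat) (hn : (0 < n)%N)
    (B : binformat R n) (F S : n.-tuple bool -> R)
    (hF : is_fp_cdf E m B F) (hS : is_fp_survival E m B S)
    (* s = succ(1/2): the smallest element of F^E_m greater than 1/2 *)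
    (s : R) (hs_fl : is_float E m s) (hs_gt : 2^-1 < s)
    (hs_min : forall x : R, is_float E m x -> 2^-1 < x -> s <= x)
    (* bstar = min_{<_B} { b | F b >= succ(1/2) } *)
    (bstar : n.-tuple bool) (hbstar : s <= F bstar)
    (hbstar_min : forall b, s <= F b -> bleB B bstar b)
    (hSbstar : S bstar < 2^-1) :
  (* (i) *)
  (exists (d : measure_display) (T : measurableType d)
          (P : probability T R) (X : T -> xreal R),
     [/\ forall w, exists b, X w = bf_gamma B b,
         forall A : set (xreal R), measurable (X @^-1` A) &
         forall (t : xreal R), (exists b, bf_gamma B b = t) ->
         forall rt : n.-tuple bool,
           xle (bf_gamma B rt) t ->
           (forall b, xle (bf_gamma B b) t -> bleB B b rt) ->
           P [set w | xle (X w) t] = (Gstar B F S bstar rt)%:E]) /\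
  (* (ii) *)
  (forall b, let: (d, f) := Gfun B F S bstar b in
     (d = 0 /\ 0 <= f <= 2^-1) \/ (d = 1 /\ 0 <= f < 2^-1)) /\
  (* (iii) *)
  (forall b b', (Gfun B F S bstar b).1 < (Gfun B F S bstar b').1 ->
     Gstar B F S bstar b < Gstar B F S bstar b').
Proof.
case: hF => hFr hFtop hFmono.
case: hS => hSr hStop hSmono.
have GE b : Gstar B F S bstar b = if bltB B b bstar then F b else 1 - S b.
  rewrite /Gstar /Gfun; case: ifP => _.
    by rewrite subr0 mul1r mul0r addr0.
  by rewrite subrr mul0r add0r mul1r.
have hFlt b : bltB B b bstar -> F b <= 2^-1.
  move=> hb.
  have Fs : F b < s.
    rewrite ltNge; apply/negP => /hbstar_min hle.
    by rewrite (bleB_lt hle) in hb.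
  rewrite leNgt; apply/negP => h.
  by have := hs_min _ (proj1 (hFr b)) h; rewrite leNgt Fs.
have hSlt b : ~~ bltB B b bstar -> S b < 2^-1.
  move=> hb; apply: le_lt_trans hSbstar.
  have [->|ne] := eqVneq b bstar; first by [].
  case/orP: (bltB_total B (elimN eqP ne)) => h; first by rewrite h in hb.
  exact: hSmono.
have key b c : bltB B b bstar -> ~~ bltB B c bstar ->
    Gstar B F S bstar b < Gstar B F S bstar c.
  move=> hb hc; rewrite !GE hb (negbTE hc).
  have := hFlt b hb; have := hSlt c hc; lra.
have Gmono b c : bleB B b c -> Gstar B F S bstar b <= Gstar B F S bstar c.
  move=> hbc; case/orP: (hbc) => [/eqP->//|hlt].
  case hb: (bltB B b bstar); case hc: (bltB B c bstar).
  - rewrite !GE hb hc; exact: hFmono.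
  - by apply/ltW/key => //; rewrite hc.
  - by rewrite (bltB_trans hlt hc) in hb.
  - rewrite !GE hb hc lerD2l lerN2; exact: hSmono.
have G0 b : 0 <= Gstar B F S bstar b.
  rewrite GE; case: ifP => _.
    by case: (hFr b) => _ /andP[].
  by case: (hSr b) => _ /andP[_ h]; rewrite subr_ge0.
have Gtop : Gstar B F S bstar (bf_phi B (ones n)) = 1.
  by rewrite GE top_max hStop subr0.
split; last split.
- pose e := sort (bleB B) (enum {: n.-tuple bool}).
  pose N := size e.
  have e_uniq : uniq e by rewrite sort_uniq enum_uniq.
  have e_mem b : b \in e by rewrite mem_sort mem_enum.
  have e_sorted : sorted (bleB B) e by apply: sort_sorted; exact: bleB_total.
  have bleB_refl : reflexive (bleB B) by move=> x; rewrite /bleB eqxx.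
  have bt : transitive (bleB B) by move=> y x z; apply: bleB_trans.
  have e_ord k r : (k < N)%N -> (r < N)%N ->
      bleB B (nth bstar e k) (nth bstar e r) = (k <= r)%N.
    move=> kN rN; apply/idP/idP => [h|kr]; last first.
      by apply: (sorted_leq_nth bt bleB_refl bstar e_sorted).
    rewrite leqNgt; apply/negP => rk.
    have h2 : bleB B (nth bstar e r) (nth bstar e k).
      by apply: (sorted_leq_nth bt bleB_refl bstar e_sorted) => //; exact: ltnW.
    move: (bleB_anti h h2) => /eqP; rewrite nth_uniq // => /eqP kr.
    by rewrite kr ltnn in rk.
  pose g k := Gstar B F S bstar (nth bstar e k).
  pose mass k := if (k < N)%N then g k - (if k is k'.+1 then g k' else 0) else 0.
  have mass_ge0 k : 0 <= mass k.
    rewrite /mass; case: ifP => // kN; case: k kN => [|k] kN; first by rewrite subr0 G0.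
    rewrite subr_ge0; apply: Gmono; rewrite e_ord //; exact: ltnW.
  have tele r : (r < N)%N -> \sum_(k < r.+1) mass k = g r.
    elim: r => [|r IH] hr.
      by rewrite big_ord_recr big_ord0 /= /mass hr add0r subr0.
    rewrite big_ord_recr /= IH ?(ltnW hr) // /mass hr.
    by rewrite addrC subrK.
  have sumsel b (p : nat -> bool) :
      (forall k, (k < N)%N -> p k = bleB B (nth bstar e k) b) ->
      \sum_(k < N) mass k * (p k)%:R = Gstar B F S bstar b.
    move=> hp.
    have rN : (index b e < N)%N by rewrite index_mem.
    have hb : nth bstar e (index b e) = b by rewrite nth_index.
    set r := index b e in rN hb.
    transitivity (\sum_(k < N) mass k * (k <= r)%N%:R).
      by apply: eq_bigr => k _; rewrite hp // -hb e_ord.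
    rewrite -(big_mkord xpredT (fun k => mass k * (k <= r)%N%:R)).
    rewrite (big_cat_nat (n:=r.+1)) //= [X in _ + X]big1_seq ?addr0; last first.
      move=> k; rewrite mem_index_iota => /andP[_ /andP[rk _]].
      by rewrite (leqNgt k r) rk mulr0.
    rewrite big_mkord -hb -/(g r) -tele //; apply: eq_bigr => k _.
    by rewrite -ltnS ltn_ord mulr1.
  pose w k : {nonneg R} := NngNum (mass_ge0 k).
  pose mu := msum (fun k => mscale (w k) (@dirac _ nat k R)) N.
  have muE U : mu U = (\sum_(k < N) mass k * ((k : nat) \in U)%:R)%:E.
    rewrite /mu /msum /=; under eq_bigr do rewrite /mscale /dirac /indic -EFinM.
    by rewrite sumEFin.
  have mu1 : mu setT = 1%:E.
    rewrite muE (sumsel (bf_phi B (ones n))) ?Gtop // => k _.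
    transitivity true; first exact/mem_set.
    apply/esym.
    rewrite /bleB; have [->|ne] := eqVneq (nth bstar e k) (bf_phi B (ones n)); first by [].
    case/orP: (bltB_total B (elimN eqP ne)) => h; first by rewrite h.
    by rewrite top_max in h.
  pose P := mnormalize mu (@dirac _ nat 0%N R).
  have PE U : P U = mu U.
    rewrite /P /mnormalize /= -/mu mu1 /=.
    by rewrite onee_eq0 /= invr1 mule1.
  exists default_measure_display, nat, P, (fun k => bf_gamma B (nth bstar e k)).
  split.
  + by move=> k; exists (nth bstar e k).
  + by [].
  + move=> t _ rt hrt1 hrt2.
    transitivity (mu [set w | xle (bf_gamma B (nth bstar e w)) t]); first exact: PE.
    rewrite muE; congr EFin.
    apply: sumsel => k _; apply/idP/idP => [/set_mem /hrt2 //|h].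
    by apply/mem_set; apply: xle_trans hrt1; apply: gamma_mono.
- move=> b; rewrite /Gfun; case: ifPn => hb.
    by left; split=> //; case: (hFr b) => _ /andP[h0 _]; rewrite h0 hFlt.
  by right; split=> //; case: (hSr b) => _ /andP[h0 _]; rewrite h0 hSlt.
- move=> b b'; rewrite /Gfun.
  case: ifP => hb; case: ifP => hb' /=; rewrite ?ltxx ?ltr10 // => _.
  by apply: key => //; rewrite hb'.
Qed.
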